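(* Let $\mathcal{P}=\langle P,\le\rangle$ be a finite bounded poset with $|P|\ge 2$ and height $H$, and let $R^+(\mathcal{P})$ be its interval rank poset. Then $H(R^+(\mathcal{P}))\ge H(\mathcal{P})$.
   Context: A poset is bounded if it has a least and a greatest element. The height $H(\mathcal{Q})$ of a finite poset is the number of elements in its largest chain; $H=H(\mathcal{P})$. For $a\in P$, $\uparrow a=\{b:b\ge a\}$ and $\downarrow a=\{b:b\le a\}$ as subposets. The standard interval rank is $R^+(a)=[H(\uparrow a)-1,\;H-H(\downarrow a)]$. The interval rank poset $R^+(\mathcal{P})$ is the set $\{R^+(a):a\in P\}$ of intervals ordered by $\ge_W$, where $[x_*,x^*]\le_W[y_*,y^*]$ iff $x_*\le y_*$ and $x^*\le y^*$. *)

(* Defs.v *)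
From mathcomp Require Import all_boot all_order.
Set Implicit Arguments. Unset Strict Implicit. Unset Printing Implicit Defensive.
Import Order.Theory.
Local Open Scope order_scope.

Section Heights.
Context {disp : Order.disp_t} {T : finPOrderType disp}.

Definition is_chain (C : {set T}) : bool :=
  [forall x in C, forall y in C, (x <= y) || (y <= x)].

Definition height (S : {set T}) : nat :=
  \max_(C : {set T} | (C \subset S) && is_chain C) #|C|.

Definition Hgt : nat := height [set: T].

Definition upset (a : T) : {set T} := [set b | a <= b].
Definition downset (a : T) : {set T} := [set b | b <= a].

(* Standard interval rank R^+(a) = [H(up a) - 1, H - H(down a)], as a pair. *)
Definition Rplus (a : T) : nat * nat :=
  ((height (upset a)).-1, (Hgt - height (downset a))%N).

Definition leW (x y : nat * nat) : bool := ((x.1 <= y.1) && (x.2 <= y.2))%N.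

Definition Rplus_elems : seq (nat * nat) := undup [seq Rplus a | a <- enum T].

(* Height of R^+(P) ordered by <=_W: largest set of (indices of distinct)
   intervals that are pairwise <=_W-comparable. *)
Definition height_Rplus : nat :=
  \max_(C : {set 'I_(size Rplus_elems)} |
        [forall i in C, forall j in C,
           leW (nth (0,0)%N Rplus_elems i) (nth (0,0)%N Rplus_elems j)
        || leW (nth (0,0)%N Rplus_elems j) (nth (0,0)%N Rplus_elems i)])
    #|C|.

End Heights.

Definition bounded_poset {disp : Order.disp_t} (T : finPOrderType disp) : Prop :=
  (exists b : T, forall x : T, b <= x) /\ (exists t : T, forall x : T, x <= t).

(* Main.v *)
Require Import Defs.
From mathcomp Require Import all_boot all_order.
Set Implicit Arguments. Unset Strict Implicit. Unset Printing Implicit Defensive.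
Import Order.Theory.

Section H.
Context {disp : Order.disp_t} {T : finPOrderType disp}.
Local Open Scope order_scope.

Lemma height_ge (S C : {set T}) : C \subset S -> is_chain C -> (#|C| <= height S)%N.
Proof. move=> h1 h2; rewrite /height; rewrite (bigop.leq_bigmax_cond (P := fun C : {set T} => (C \subset S) && is_chain C) (F := fun C => #|C|)) //; by rewrite h1 h2. Qed.

Lemma height_ex (S : {set T}) : exists2 C : {set T}, (C \subset S) && is_chain C & #|C| = height S.
Proof.
pose A := [pred C : {set T} | (C \subset S) && is_chain C].
have h0 : set0 \in A.
  rewrite inE /=; apply/andP; split; first exact: sub0set.
  by apply/forallP => x; apply/implyP; rewrite inE.
have pos : (0 < #|A|)%N by apply/card_gt0P; exists set0.
have [C hC e] := @bigop.eq_bigmax_cond _ A (fun C : {set T} => #|C|) pos.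
exists C; first by [].
by rewrite -e /height; apply: eq_bigl => D; rewrite inE.
Qed.

Lemma chainP (C : {set T}) x y : is_chain C -> x \in C -> y \in C -> (x <= y) || (y <= x).
Proof. move=> /forallP /(_ x) /implyP H hx hy; move: (H hx) => /forallP /(_ y) /implyP; exact. Qed.

Lemma up_pos (b : T) : (1 <= height (upset b))%N.
Proof.
have -> : 1%N = #|[set b]| by rewrite cards1.
apply: height_ge; first by rewrite sub1set inE.
apply/forallP => x; apply/implyP; rewrite inE => /eqP ->.
apply/forallP => y; apply/implyP; rewrite inE => /eqP ->; by rewrite lexx.
Qed.

Lemma up_lt (a b : T) : a < b -> (height (upset b) < height (upset a))%N.
Proof.
move=> ab; have [C /andP [sC cC] <-] := height_ex (upset b).
have aC : a \notin C.
  apply/negP => /(subsetP sC); rewrite inE => ba.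
  by move: (lt_le_trans ab ba); rewrite ltxx.
have -> : (#|C|.+1 = #|a |: C|)%N by rewrite cardsU1 aC.
apply: height_ge.
  apply/subsetP => x; rewrite !inE => /orP [/eqP -> | /(subsetP sC)]; first by [].
  by rewrite inE => bx; exact: le_trans (ltW ab) bx.
have gen : forall x, x \in C -> a <= x.
  by move=> x /(subsetP sC); rewrite inE => bx; exact: le_trans (ltW ab) bx.
apply/forallP => x; apply/implyP; rewrite !inE => hx.
apply/forallP => y; apply/implyP; rewrite !inE => hy.
case/orP: hx => [/eqP -> | hx]; case/orP: hy => [/eqP -> | hy].
- by rewrite lexx.
- by rewrite gen.
- by rewrite gen ?orbT.
- exact: chainP cC hx hy.
Qed.

Lemma Rplus_mono (a b : T) : a <= b -> leW (Rplus b) (Rplus a).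
Proof.
move=> ab; rewrite /leW /Rplus /=; apply/andP; split.
- rewrite -!subn1; apply: leq_sub2r; move: (height_ex (upset b)) => [C /andP [sC cC] <-].
  apply: height_ge => //; apply: subset_trans sC _.
  by apply/subsetP => x; rewrite !inE => bx; exact: le_trans ab bx.
- apply: leq_sub2l; move: (height_ex (downset a)) => [C /andP [sC cC] <-].
  apply: height_ge => //; apply: subset_trans sC _.
  by apply/subsetP => x; rewrite !inE => xa; exact: le_trans xa ab.
Qed.

Lemma Rplus_inj (a b : T) : a < b -> Rplus a != Rplus b.
Proof.
move=> ab; apply/negP => /eqP [] e _.
have := up_lt ab; have := up_pos b; have := up_pos a.
move: e; case: (height (upset a)) => // n; case: (height (upset b)) => // m /= -> _ _.
by rewrite ltnn.
Qed.

End H.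

Theorem proposition5 (disp : Order.disp_t) (T : finPOrderType disp) :
  bounded_poset T -> (2 <= #|T|)%N ->
  (@Hgt disp T <= @height_Rplus disp T)%N.
Proof.
move=> _ _; rewrite /Hgt.
have [C /andP [_ cC] <-] := height_ex (T := T) [set: T].
set s := @Rplus_elems disp T.
have ins : forall a : T, Rplus a \in s.
  by move=> a; rewrite /s /Rplus_elems mem_undup; apply: map_f; rewrite mem_enum.
have lts : forall a : T, (index (Rplus a) s < size s)%N by move=> a; rewrite index_mem.
pose f (a : T) : 'I_(size s) := Ordinal (lts a).
have nthf : forall a, nth (0,0)%N s (f a) = Rplus a by move=> a; rewrite /= nth_index.
have -> : #|C| = #|f @: C|.
  rewrite card_in_imset // => a b ha hb /(congr1 val) /= e.
  have e' : Rplus a = Rplus b by rewrite -(nth_index (0,0)%N (ins a)) e nth_index.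
  case/orP: (chainP cC ha hb) => h; case: (eqVneq a b) => // nab.
  - have : (a < b)%O by rewrite lt_neqAle nab h.
    by move/Rplus_inj; rewrite e' eqxx.
  - have : (b < a)%O by rewrite lt_neqAle eq_sym nab h.
    by move/Rplus_inj; rewrite e' eqxx.
rewrite /height_Rplus -/s.
apply: (bigop.leq_bigmax_cond (F := fun C : {set 'I_(size s)} => #|C|)).
apply/forallP => i; apply/implyP => /imsetP [a ha ->].
apply/forallP => j; apply/implyP => /imsetP [b hb ->].
rewrite !nthf; case/orP: (chainP cC ha hb) => h.
- by rewrite (Rplus_mono h) orbT.
- by rewrite (Rplus_mono h).
Qed.
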